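(* Let $k\ge 2$. For every $n\ge 2k$ there are weighted $k$-uniform hypergraphs $w_1,\ldots,w_k:[n]^{(k)}\to\mathbb{R}$ such that, for every $i$, $w_i([n])=0$ and $\|w_i\|_1=\binom nk$, and such that for all $1\le i<j\le k$ we have $$\operatorname{disc}(w_i,w_j)=0.$$
   Context: $[n]=\{1,\ldots,n\}$ and $V^{(k)}$ denotes the family of $k$-element subsets of $V$. A weighted $k$-uniform hypergraph on $V$ is a function $w:V^{(k)}\to\mathbb{R}$; $w(S)=\sum_{e\in S^{(k)}}w(e)$ for $S\subseteq V$, $\|w\|_1=\sum_{e}|w(e)|$, $\langle w,u\rangle=\sum_{e\in V^{(k)}}w(e)u(e)$, and the density is $d(w)=w(V)/\binom{|V|}{k}$. For a permutation $\pi$ of $V$, $w_\pi(e)=w(\pi^{-1}(e))$. With $n=|V|$, $\operatorname{disc}^+(w,u)=\max_\pi\langle w_\pi,u\rangle-d(w)d(u)\binom nk$, $\operatorname{disc}^-(w,u)=d(w)d(u)\binom nk-\min_\pi\langle w_\pi,u\rangle$ (maxima/minima over all permutations $\pi$ of $V$), and $\operatorname{disc}(w,u)=\max\{\operatorname{disc}^+(w,u),\operatorname{disc}^-(w,u)\}=\max_\pi|\langle w_\pi,u\rangle-d(w)d(u)\binom nk|$. *)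

(* Defs.v *)
From mathcomp Require Import all_boot all_order all_fingroup all_algebra.
From mathcomp Require Import reals.
Set Implicit Arguments. Unset Strict Implicit. Unset Printing Implicit Defensive.
Import Order.TTheory GRing.Theory Num.Theory.
Local Open Scope ring_scope.

(* A weighted k-uniform hypergraph is a function w : {set 'I_n} -> R whose
   values on sets of size different from k are ignored. *)
Section Hyper.
Variables (R : realFieldType) (n k : nat).
Implicit Types (w u : {set 'I_n} -> R) (S : {set 'I_n}).

Definition hw w S : R := \sum_(e : {set 'I_n} | (e \subset S) && (#|e| == k)) w e.

Definition l1norm w : R := \sum_(e : {set 'I_n} | #|e| == k) `|w e|.

Definition inner w u : R := \sum_(e : {set 'I_n} | #|e| == k) w e * u e.

Definition density w : R := hw w setT / ('C(n, k))%:R.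

Definition wperm w (pi : {perm 'I_n}) : {set 'I_n} -> R :=
  fun e => w ((pi^-1)%g @: e).

Definition disc w u : R :=
  \big[Num.max/0]_(pi : {perm 'I_n})
     `|inner (wperm w pi) u - density w * density u * ('C(n, k))%:R|.
End Hyper.

(* Main.v *)
Require Import Defs.
From mathcomp Require Import all_boot all_order all_fingroup all_algebra.
From mathcomp Require Import reals.
From mathcomp Require Import zify ring lra.
Import Order.TTheory GRing.Theory Num.Theory.
Local Open Scope ring_scope.
Set Implicit Arguments. Unset Strict Implicit.

Section Aux.
Variables (R : realFieldType) (n : nat).
Local Notation V := 'I_n.+1.
Implicit Types (e T U : {set V}).

Definition xin (c : V) e : R := (c \in e)%:R.
Definition fp (a b : nat -> V) (t : nat) e : R :=
  \prod_(r < t) (xin (a r) e - xin (b r) e).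
Definition deg (m : nat) (F : {set V} -> R) :=
  exists al : {set V} -> R, (forall T, (m < #|T|)%N -> al T = 0) /\
    forall e, F e = \sum_T al T * (T \subset e)%:R.

Lemma deg_ext m F G : (forall e, F e = G e) -> deg m F -> deg m G.
Proof. by move=> FG [al [h1 h2]]; exists al; split => // e; rewrite -FG. Qed.

Lemma deg_sub m F G : deg m F -> deg m G -> deg m (fun e => F e - G e).
Proof.
move=> [al [h1 h2]] [be [g1 g2]]; exists (fun T => al T - be T); split.
  by move=> T hT; rewrite h1 // g1 // subr0.
by move=> e; rewrite h2 g2 -sumrB; apply: eq_bigr => T _; rewrite mulrBl.
Qed.

Lemma deg_mulx m F c : deg m F -> deg m.+1 (fun e => F e * xin c e).
Proof.
move=> [al [h1 h2]].
exists (fun U => \sum_(T | T :|: [set c] == U) al T); split.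
  move=> U hU; apply: big1 => T /eqP hT; apply: h1.
  move: hU; rewrite -hT setUC cardsU1; case: (c \in T) => /=; lia.
move=> e; rewrite h2 mulr_suml.
under [RHS]eq_bigr do rewrite mulr_suml.
rewrite (exchange_big_dep xpredT) //=.
apply: eq_bigr => T _.
rewrite (big_pred1 (T :|: [set c])); last by move=> U; rewrite /= eq_sym.
by rewrite subUset sub1set /xin -mulrA -natrM mulnb.
Qed.

Lemma deg_fp a b t : deg t (fp a b t).
Proof.
elim: t => [|t IH].
  exists (fun T => (T == set0)%:R); split.
    move=> T hT; have: T != set0 by rewrite -card_gt0.
    by move/negbTE => ->.
  move=> e; rewrite /fp big_ord0 (bigD1 set0) //= big1 ?addr0.
    by rewrite eqxx sub0set mul1r.
  by move=> T /negbTE ->; rewrite mul0r.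
apply: (@deg_ext _ (fun e => fp a b t e * xin (a t) e - fp a b t e * xin (b t) e)).
  by move=> e; rewrite /fp big_ord_recr /= mulrBr.
by apply: deg_sub; apply: deg_mulx.
Qed.

Lemma mem_imV (pi : {perm V}) x e : (x \in (pi^-1)%g @: e) = (pi x \in e).
Proof.
apply/imsetP/idP => [[y ye ->]|h]; first by rewrite permKV.
by exists (pi x); rewrite ?permK.
Qed.


Lemma Kzero (k : nat) a b t T r0 : (r0 < t)%N ->
  a r0 != b r0 ->
  (forall r, (r < t)%N -> r != r0 ->
     [/\ a r != a r0, a r != b r0, b r != a r0 & b r != b r0]) ->
  a r0 \notin T -> b r0 \notin T ->
  \sum_(e : {set V} | #|e| == k) (T \subset e)%:R * fp a b t e = 0.
Proof.
move=> hr0 hab hother haT hbT.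
pose s := tperm (a r0) (b r0).
pose h := fun e : {set V} => (s^-1)%g @: e.
have memh x e : (x \in h e) = (s x \in e) by rewrite /h mem_imV.
have hh : involutive h by move=> e; apply/setP => x; rewrite !memh /s tpermK.
have ch e : #|h e| = #|e| by rewrite /h card_imset //; apply: perm_inj.
have sT e : (T \subset h e) = (T \subset e).
  have fx x : x \in T -> s x = x.
    move=> xT; rewrite /s tpermD //.
      by apply: (contraNneq _ haT) => ->.
    by apply: (contraNneq _ hbT) => ->.
  apply/subsetP/subsetP => H x xT; have := H x xT; by rewrite ?memh fx.
have fh e : fp a b t (h e) = - fp a b t e.
  rewrite /fp (bigD1 (Ordinal hr0)) //= [in RHS](bigD1 (Ordinal hr0)) //=.
  rewrite /xin !memh /s tpermL tpermR -mulNr opprB; congr (_ * _).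
  apply: eq_bigr => r hr.
  have hr' : (r : nat) != r0.
    by apply/eqP => E; move/eqP: hr; apply; apply: val_inj.
  have [h1 h2 h3 h4] := hother r (ltn_ord r) hr'.
  by rewrite !memh /s !tpermD // eq_sym.
set S := LHS.
have : S = - S.
  rewrite {1}/S (reindex_inj (can_inj hh)) /= -sumrN.
  apply: eq_big => e; first by rewrite ch.
  by move=> _; rewrite sT fh mulrN.
move=> HS; lra.
Qed.

Definition A (r : nat) : V := inord (2 * r).
Definition B (r : nat) : V := inord (2 * r).+1.

Lemma vA k r : (2 * k <= n.+1)%N -> (r < k)%N -> val (A r) = (2 * r)%N.
Proof. by move=> hn hr; rewrite /A /= inordK //; lia. Qed.
Lemma vB k r : (2 * k <= n.+1)%N -> (r < k)%N -> val (B r) = (2 * r).+1.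
Proof. by move=> hn hr; rewrite /B /= inordK //; lia. Qed.


Lemma pigeon k t T : (2 * k <= n.+1)%N -> (t <= k)%N -> (#|T| < t)%N ->
  exists2 r0, (r0 < t)%N & (A r0 \notin T) && (B r0 \notin T).
Proof.
move=> hn htk hT.
case: (boolP [exists r : 'I_t, (A r \notin T) && (B r \notin T)]).
  by case/existsP => r hr; exists r.
rewrite negb_exists => /forallP hall.
pose g (r : 'I_t) := if A r \in T then A r else B r.
have lk (r : 'I_t) : (r < k)%N by apply: leq_trans (ltn_ord r) htk.
have gi : injective g.
  move=> r1 r2; rewrite /g => E; apply: val_inj => /=; move: E.
  case: ifP => _; case: ifP => _ /(congr1 val);
    rewrite ?(vA hn (lk r1)) ?(vA hn (lk r2)) ?(vB hn (lk r1)) ?(vB hn (lk r2)); lia.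
have sub : g @: setT \subset T.
  apply/subsetP => _ /imsetP [r _ ->]; rewrite /g; case: ifP => // /negbT hA.
  by have := hall r; rewrite hA /= negbK.
have := subset_leq_card sub; rewrite card_imset // cardsT card_ord. move=> H; move: hT; by rewrite ltnNge H.
Qed.

Lemma KT k t T : (2 * k <= n.+1)%N -> (t <= k)%N -> (#|T| < t)%N ->
  \sum_(e : {set V} | #|e| == k) (T \subset e)%:R * fp A B t e = 0.
Proof.
move=> hn htk hT; have [r0 hr0 /andP [h1 h2]] := pigeon hn htk hT.
have lk r : (r < t)%N -> (r < k)%N by move=> hr; apply: leq_trans hr htk.
apply: (Kzero _ hr0) => //.
  by apply/eqP => /(congr1 val); rewrite (vA hn (lk _ hr0)) (vB hn (lk _ hr0)); lia.
move=> r hr hne; split; apply/eqP => /(congr1 val);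
  rewrite ?(vA hn (lk _ hr0)) ?(vB hn (lk _ hr0)) ?(vA hn (lk _ hr)) ?(vB hn (lk _ hr));
  move: hne => /eqP; lia.
Qed.

Lemma witness k t : (2 * k <= n.+1)%N -> (t <= k)%N ->
  exists e0 : {set V}, (#|e0| == k) && (fp A B t e0 == 1).
Proof.
move=> hn htk.
pose h0 (j : 'I_k) : V := inord (if (j < t)%N then (2 * j)%N else (t + j)%N).
have vh (j : 'I_k) : val (h0 j) = if (j < t)%N then (2 * j)%N else (t + j)%N.
  rewrite /h0 /= inordK //; have := ltn_ord j; case: (ltnP j t); lia.
have hi : injective h0.
  move=> j1 j2 /(congr1 val); rewrite !vh => E; apply: val_inj => /=; move: E.
  case: (ltnP j1 t); case: (ltnP j2 t); lia.
exists (h0 @: setT); apply/andP; split.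
  by rewrite card_imset // cardsT card_ord.
rewrite /fp big1 //= => r _.
have lk : (r < k)%N by apply: leq_trans (ltn_ord r) htk.
have hA : A r \in h0 @: setT.
  apply/imsetP; exists (Ordinal lk) => //; apply: val_inj.
  by rewrite vh /= (vA hn lk) ltn_ord.
have hB : B r \notin h0 @: setT.
  apply/imsetP => -[j _ /(congr1 val)]; rewrite vh (vB hn lk).
  have := ltn_ord r; have := ltn_ord j; case: (ltnP j t); lia.
by rewrite /xin hA (negbTE hB) subr0.
Qed.


Definition Sf (k t : nat) : R := \sum_(e : {set V} | #|e| == k) `|fp A B t e|.
Definition W (k t : nat) : {set V} -> R :=
  fun e => ('C(n.+1, k)%:R / Sf k t) * fp A B t e.

Lemma Sf_gt0 k t : (2 * k <= n.+1)%N -> (t <= k)%N -> 0 < Sf k t.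
Proof.
move=> hn htk; have [e0 /andP [he0 /eqP hf]] := witness hn htk.
rewrite /Sf (bigD1 e0) //= hf normr1.
apply: (lt_le_trans ltr01); rewrite lerDl; apply: sumr_ge0 => e _; exact: normr_ge0.
Qed.

Lemma hw_W k t : (2 * k <= n.+1)%N -> (0 < t)%N -> (t <= k)%N -> hw k (W k t) setT = 0.
Proof.
move=> hn ht htk; rewrite /hw /W.
rewrite (eq_bigl (fun e : {set V} => #|e| == k)); last by move=> e; rewrite subsetT.
have := @KT k t set0 hn htk; rewrite cards0 => /(_ ht) H.
rewrite -mulr_sumr; apply/eqP; rewrite mulf_eq0; apply/orP; right; apply/eqP.
rewrite -{2}H; apply: eq_bigr => e _; by rewrite sub0set mul1r.
Qed.

Lemma l1_W k t : (2 * k <= n.+1)%N -> (t <= k)%N -> l1norm k (W k t) = 'C(n.+1, k)%:R.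
Proof.
move=> hn htk; have hS := Sf_gt0 hn htk.
transitivity (('C(n.+1, k)%:R / Sf k t) * Sf k t); last first.
  by rewrite divfK // lt0r_neq0.
rewrite /l1norm /W /Sf mulr_sumr; apply: eq_bigr => e _.
rewrite normrM ger0_norm //; apply: divr_ge0 => //; exact: ltW.
Qed.

Lemma inner_W k s t (pi : {perm V}) : (2 * k <= n.+1)%N -> (s < t)%N -> (t <= k)%N ->
  inner k (wperm (W k s) pi) (W k t) = 0.
Proof.
move=> hn hst htk.
have [al [h1 h2]] := deg_fp (fun r => pi (A r)) (fun r => pi (B r)) s.
have E e : wperm (W k s) pi e =
    ('C(n.+1, k)%:R / Sf k s) * \sum_T al T * (T \subset e)%:R.
  rewrite /wperm /W -h2 /fp; congr (_ * _); apply: eq_bigr => r _.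
  by rewrite /xin !mem_imV.
have Z : \sum_(e : {set V} | #|e| == k)
    (\sum_T al T * (T \subset e)%:R) * fp A B t e = 0.
  under eq_bigr do rewrite mulr_suml.
  rewrite (exchange_big_dep xpredT) //=.
  apply: big1 => T _.
  rewrite (eq_bigl (fun e : {set V} => #|e| == k)); last by move=> e; rewrite andbT.
  under eq_bigr do rewrite -mulrA.
  rewrite -mulr_sumr; case: (leqP #|T| s) => hT.
    by rewrite (KT hn htk (leq_ltn_trans hT hst)) mulr0.
  by rewrite h1 // mul0r.
rewrite /inner.
under eq_bigr do rewrite E /W mulrACA.
by rewrite -mulr_sumr Z mulr0.
Qed.

Lemma disc_W k s t : (2 * k <= n.+1)%N -> (0 < s)%N -> (s < t)%N -> (t <= k)%N ->
  disc k (W k s) (W k t) = 0.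
Proof.
move=> hn hs hst htk.
have hsk : (s <= k)%N by apply: ltnW; apply: leq_trans hst htk.
rewrite /disc /density (hw_W hn hs hsk) !mul0r.
apply: (big_ind (fun x => x = 0)) => //.
  by move=> x y -> ->; rewrite maxxx.
by move=> pi _; rewrite inner_W // subr0 normr0.
Qed.

End Aux.

Theorem theorem1p1 (R : realType) (k : nat) (hk : (2 <= k)%N) (n : nat)
  (hn : (2 * k <= n)%N) :
  exists w : 'I_k -> ({set 'I_n} -> R),
    (forall i : 'I_k, hw k (w i) setT = 0 /\ l1norm k (w i) = ('C(n, k))%:R) /\
    (forall i j : 'I_k, (i < j)%N -> disc k (w i) (w j) = 0).
Proof.
case: n hn => [|n] hn; first by exfalso; move: hn hk; lia.
exists (fun i : 'I_k => @W R n k i.+1); split.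
  move=> i; split; first by apply: hw_W.
  exact: l1_W.
move=> i j hij; apply: disc_W => //.
Qed.
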